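(* Let $\mathcal{S}_{\mathbb{R}}$ be the class of functions $f(z)=z+\sum_{n\ge2}a_nz^n$ in $\mathcal{S}$ all of whose coefficients $a_n$ are real. Then the harmonic analogue of $\mathcal{S}_{\mathbb{R}}$ is $\mathcal{S}_{\mathbb{R}}$ itself; that is, a harmonic function $f=h+\bar g$ ($h,g$ analytic in $\mathbb{D}$) satisfies $h+\epsilon g\in\mathcal{S}_{\mathbb{R}}$ for every $|\epsilon|=1$ if and only if $g\equiv0$ and $h\in\mathcal{S}_{\mathbb{R}}$.
   Context: $\mathbb{D}$ is the open unit disk. $\mathcal{S}$ is the class of analytic univalent functions $f$ in $\mathbb{D}$ with $f(0)=0$, $f'(0)=1$. For $\mathcal{G}\subset\mathcal{S}$, its harmonic analogue is the class of harmonic $f=h+\bar g$ ($h,g$ analytic in $\mathbb{D}$) such that $h+\epsilon g\in\mathcal{G}$ for every $\epsilon\in\mathbb{C}$ with $|\epsilon|=1$. *)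

(* Defs.v *)
From Stdlib Require Import Reals.
From Coquelicot Require Import Coquelicot.
Open Scope R_scope.

Definition inD (z : C) : Prop := Cmod z < 1.

Definition analytic_D (f : C -> C) : Prop :=
  forall z : C, inD z -> exists l : C,
    @is_derive C_AbsRing C_NormedModule f z l.

Definition taylor_coeffs_D (f : C -> C) (c : nat -> C) : Prop :=
  forall z : C, inD z -> @is_pseries C_AbsRing C_NormedModule c z (f z).

Definition class_S (f : C -> C) : Prop :=
  analytic_D f /\
  (forall z w : C, inD z -> inD w -> f z = f w -> z = w) /\
  f (RtoC 0) = RtoC 0 /\
  @is_derive C_AbsRing C_NormedModule f (RtoC 0) (RtoC 1).

Definition class_SR (f : C -> C) : Prop :=
  class_S f /\
  exists c : nat -> C, taylor_coeffs_D f c /\ forall n, Im (c n) = 0.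

(* Harmonic analogue of a class G: f = h + conj g with h, g analytic in D
   and h + eps g in G for every unimodular eps. Represented by the pair (h,g). *)
Definition harmonic_analogue (G : (C -> C) -> Prop) (h g : C -> C) : Prop :=
  analytic_D h /\ analytic_D g /\
  forall eps : C, Cmod eps = 1 -> G (fun z => h z + eps * g z)%C.

(* Main.v *)
Require Import Defs.
From Stdlib Require Import Reals.
From Stdlib Require Import Lra Psatz.
From Coquelicot Require Import Coquelicot.
Lemma conj_cont (l : C) : filterlim Cconj (@locally C_NormedModule l) (@locally C_NormedModule (Cconj l)).
Proof.
intros P [e He]. exists e. intros y Hy. apply He.
destruct Hy as [H1 H2]. split; simpl in *. exact H1.
unfold ball in *; simpl in *. unfold AbsRing_ball in *. unfold minus, plus, opp, abs in *; simpl in *.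
replace (- snd y + - - snd l) with (-(snd y + - snd l)) by ring. rewrite Rabs_Ropp. exact H2.
Qed.
Lemma powc (z : C) m : @pow_n C_AbsRing (Cconj z) m = Cconj (@pow_n C_AbsRing z m).
Proof. induction m; simpl. unfold one; simpl. unfold Cconj; simpl. unfold RtoC. f_equal; ring.
change (Cconj z * @pow_n C_AbsRing (Cconj z) m = Cconj (z * @pow_n C_AbsRing z m))%C. rewrite Cmult_conj, IHm. reflexivity. Qed.
Lemma sum_conj (c : nat -> C) (z : C) (Hc : forall n, Im (c n) = 0) n :
  @sum_n C_NormedModule (fun k => scal (pow_n (Cconj z) k) (c k)) n =
  Cconj (@sum_n C_NormedModule (fun k => scal (pow_n z k) (c k)) n).
Proof.
induction n.
- rewrite !sum_O. simpl. unfold scal; simpl. unfold mult; simpl.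
  destruct (c 0%nat) as [a b] eqn:E. specialize (Hc 0%nat). rewrite E in Hc. simpl in Hc. subst b.
  unfold Cconj, Cmult; simpl. f_equal; ring.
- rewrite !sum_Sn, IHn. unfold plus; simpl.
  rewrite Cplus_conj. f_equal.
  change (@pow_n C_AbsRing (Cconj z) (S n) * c (S n) = Cconj (@pow_n C_AbsRing z (S n) * c (S n)))%C.
  rewrite Cmult_conj. f_equal.
  + apply powc.
  + destruct (c (S n)) as [a b] eqn:E. specialize (Hc (S n)). rewrite E in Hc. simpl in Hc. subst b.
    unfold Cconj; simpl. f_equal; ring.
Qed.
Lemma pseries_conj (c : nat -> C) (z l : C) (Hc : forall n, Im (c n) = 0) :
  @is_pseries C_AbsRing C_NormedModule c z l ->
  @is_pseries C_AbsRing C_NormedModule c (Cconj z) (Cconj l).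
Proof.
unfold is_pseries, is_series. intros H.
eapply filterlim_ext. intro n. symmetry. apply sum_conj. exact Hc.
eapply filterlim_comp. exact H. apply conj_cont.
Qed.
Lemma SR_conj (F : C -> C) z : class_SR F -> inD z -> F (Cconj z) = Cconj (F z).
Proof.
intros [_ [c [Hc Hr]]] Hz.
assert (Hz' : inD (Cconj z)) by (unfold inD; rewrite Cmod_conj; exact Hz).
apply (@filterlim_locally_unique nat C_AbsRing C_NormedModule eventually _
  (@sum_n C_NormedModule (fun k => scal (pow_n (Cconj z) k) (c k)))).
- exact (Hc _ Hz').
- apply pseries_conj; auto.
Qed.

Lemma inD_locally z : inD z -> @locally C_NormedModule z inD.
Proof.
intros Hz. apply locally_le_locally_norm.
assert (He : 0 < 1 - Cmod z) by (unfold inD in Hz; lra).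
exists (mkposreal _ He). intros y Hy. unfold ball_norm in Hy; simpl in Hy.
unfold inD. replace y with (z + (minus y z))%C.
eapply Rle_lt_trans. apply Cmod_triangle. change (Cmod (minus y z)) with (norm (minus y z)). lra.
unfold minus, plus, opp; simpl. ring.
Qed.

Lemma inD_locally' z : inD z -> @locally (AbsRing_UniformSpace C_AbsRing) z inD.
Proof.
intros Hz.
assert (He : 0 < 1 - Cmod z) by (unfold inD in Hz; lra).
exists (mkposreal _ He). intros y Hy. unfold ball in Hy; simpl in Hy. unfold AbsRing_ball in Hy.
unfold inD. replace y with (z + (minus y z))%C.
eapply Rle_lt_trans. apply Cmod_triangle. change (Cmod (minus y z)) with (abs (minus y z)). simpl in Hy. lra.
unfold minus, plus, opp; simpl. ring.
Qed.

Lemma SR_transfer (f1 f2 : C -> C) : (forall z, inD z -> f1 z = f2 z) ->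
  class_SR f1 -> class_SR f2.
Proof.
intros E [[Ha [Hi [H0 Hd]]] [c [Hc Hr]]].
assert (D0 : inD 0) by (unfold inD; rewrite Cmod_0; lra).
split; [split; [|split; [|split]]|].
- intros z Hz. destruct (Ha z Hz) as [l Hl]. exists l.
  eapply is_derive_ext_loc; [|exact Hl].
  eapply filter_imp; [|apply inD_locally'; exact Hz]. exact E.
- intros z w Hz Hw Hzw. apply Hi; auto. rewrite !E; auto.
- rewrite <- E; auto.
- eapply is_derive_ext_loc; [|exact Hd].
  eapply filter_imp; [|apply inD_locally'; exact D0]. exact E.
- exists c. split; auto. intros z Hz. rewrite <- E; auto.
Qed.

Theorem theorem3p10 (h g : C -> C) :
  analytic_D h -> analytic_D g ->
  (harmonic_analogue class_SR h g <->
   ((forall z : C, inD z -> g z = 0) /\ class_SR h)).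
Proof.
intros Ah Ag. split.
- intros [_ [_ H]].
  assert (H1 := H 1%C Cmod_1).
  assert (H2 := H (-(1))%C Cmod_m1).
  assert (Hi : Cmod Ci = 1).
  { unfold Cmod, Ci; simpl. replace (0 * (0 * 1) + 1 * (1 * 1)) with 1 by ring. apply sqrt_1. }
  assert (H3 := H Ci Hi).
  assert (G0 : forall z, inD z -> g z = 0).
  { intros z Hz.
    assert (E1 := SR_conj _ z H1 Hz). assert (E2 := SR_conj _ z H2 Hz).
    assert (E3 := SR_conj _ z H3 Hz). simpl in E1, E2, E3.
    destruct (h z) as [a b]. destruct (g z) as [p q].
    destruct (h (Cconj z)) as [a' b']. destruct (g (Cconj z)) as [p' q'].
    unfold Cconj, Cplus, Cmult, Ci, Copp, RtoC in E1, E2, E3; simpl in E1, E2, E3.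
    injection E1; injection E2; injection E3; intros.
    unfold RtoC; f_equal; lra. }
  split; auto.
  eapply SR_transfer; [|exact H1]. intros z Hz. simpl. rewrite G0; auto.
  unfold Cmult, Cplus, RtoC; simpl. destruct (h z); simpl; f_equal; ring.
- intros [G0 Hh]. split; [|split]; auto. intros eps _.
  eapply SR_transfer; [|exact Hh]. intros z Hz. simpl. rewrite G0; auto.
  unfold Cmult, Cplus, RtoC; simpl. destruct (h z); destruct eps; simpl; f_equal; ring.
Qed.
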